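(* Assume the setting of: $X$ a finite-dimensional real Hilbert space, $Y$ a real Hilbert space, $\mathsf{K_h}: X\to Y$ linear, $\{\phi_1,\dots,\phi_n\}$ an orthonormal basis of $X$ with $\mathsf{K_h}\phi_i \neq c\,\mathsf{K_h}\phi_j$ for all $i\neq j$, $c\in\mathbb{R}$; $\mathsf{P}$ the orthogonal projection onto $\mathcal{N}(\mathsf{K_h})^\perp$ and $\mathsf{W}\phi_i = \|\mathsf{P}\phi_i\|_X\phi_i$. Let $\{j_1,\dots,j_r\}\subset\{1,\dots,n\}$. Let $x^*$ be the minimum norm least squares solution of $\mathsf{K_h}x = \mathsf{K_h}(\phi_{j_1}+\cdots+\phi_{j_r})$ and, for $q=1,\dots,r$, let $x_{j_q}^*$ be the minimum norm least squares solution of $\mathsf{K_h}x = \mathsf{K_h}\phi_{j_q}$. Then $$\mathsf{W}^{-1}x^* = \mathsf{W}^{-1}x_{j_1}^* + \cdots + \mathsf{W}^{-1}x_{j_r}^*,$$ where for each $q$, $$\mathsf{W}^{-1}x_{j_q}^* = \|\mathsf{P}\phi_{j_q}\|_X \sum_{i=1}^n \left(\frac{\mathsf{P}\phi_{j_q}}{\|\mathsf{P}\phi_{j_q}\|_X}, \frac{\mathsf{P}\phi_i}{\|\mathsf{P}\phi_i\|_X}\right)_X \phi_i,$$ and the coefficient of $\phi_{j_q}$ in this expansion is strictly larger than the coefficient of every $\phi_i$ with $i\neq j_q$.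
   Context: $\mathcal{N}(\mathsf{K_h})$ denotes the nullspace of $\mathsf{K_h}$. The minimum norm least squares solution of $\mathsf{K_h}x=b$ is $\mathsf{K_h}^\dagger b$, where $\mathsf{K_h}^\dagger$ is the Moore–Penrose inverse. *)

(* Defs.v *)
From HB Require Import structures.
From mathcomp Require Import all_boot all_order all_algebra.
From mathcomp Require Import reals.
Set Implicit Arguments. Unset Strict Implicit. Unset Printing Implicit Defensive.
Import Order.TTheory GRing.Theory Num.Theory.
Local Open Scope ring_scope.

Section Defs.
Variable R : realType.

Definition is_inner_product (V : lmodType R) (ip : V -> V -> R) : Prop :=
  [/\ (forall u v, ip u v = ip v u),
      (forall (a : R) u v w, ip (a *: u + v) w = a * ip u w + ip v w),
      (forall u, 0 <= ip u u) &
      (forall u, ip u u = 0 -> u = 0)].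

Definition ipnorm (V : lmodType R) (ip : V -> V -> R) (v : V) : R :=
  Num.sqrt (ip v v).

Definition is_orthonormal_basis (X : lmodType R) (ip : X -> X -> R) (n : nat)
    (phi : 'I_n -> X) : Prop :=
  (forall i j, ip (phi i) (phi j) = (i == j)%:R) /\
  (forall x, exists c : 'I_n -> R, x = \sum_(i < n) c i *: phi i).

Definition is_proj_null_perp (X Y : lmodType R) (ipX : X -> X -> R)
    (K : X -> Y) (P : X -> X) : Prop :=
  forall x, (forall z, K z = 0 -> ipX (P x) z = 0) /\ K (x - P x) = 0.

Definition is_mnls (X Y : lmodType R) (ipX : X -> X -> R) (ipY : Y -> Y -> R)
    (K : X -> Y) (b : Y) (x : X) : Prop :=
  let lsq z := forall w, ipnorm ipY (K z - b) <= ipnorm ipY (K w - b) in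
  lsq x /\ (forall z, lsq z -> ipnorm ipX x <= ipnorm ipX z).

(* W^{-1}, where W phi_i = ||P phi_i|| phi_i (linear), i.e.
   W^{-1} x = sum_i (x, phi_i) / ||P phi_i|| phi_i *)
Definition Winv (X : lmodType R) (ipX : X -> X -> R) (n : nat)
    (phi : 'I_n -> X) (P : X -> X) (x : X) : X :=
  \sum_(i < n) (ipX x (phi i) / ipnorm ipX (P (phi i))) *: phi i.

Definition expcoef (X : lmodType R) (ipX : X -> X -> R) (n : nat)
    (phi : 'I_n -> X) (P : X -> X) (j i : 'I_n) : R :=
  ipnorm ipX (P (phi j)) *
  ipX ((ipnorm ipX (P (phi j)))^-1 *: P (phi j))
      ((ipnorm ipX (P (phi i)))^-1 *: P (phi i)).
End Defs.

(* Main.v *)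
Require Import Defs.
From HB Require Import structures.
From mathcomp Require Import all_boot all_order all_algebra.
From mathcomp Require Import reals.
From mathcomp Require Import ring lra.
Import Order.TTheory GRing.Theory Num.Theory.
Local Open Scope ring_scope.
Set Implicit Arguments. Unset Strict Implicit.

Section Aux.
Variable R : realType.
Variable X : lmodType R.
Variable ip : X -> X -> R.
Hypothesis hX : is_inner_product ip.

Lemma ipC u v : ip u v = ip v u. Proof. by move: hX; rewrite /is_inner_product; case=> h *; apply: h. Qed.
Lemma ipDl a u v w : ip (a *: u + v) w = a * ip u w + ip v w. Proof. by move: hX; rewrite /is_inner_product; case=> _ h *; apply: h. Qed.
Lemma ip_ge0 u : 0 <= ip u u. Proof. by move: hX; rewrite /is_inner_product; case=> _ _ h *; apply: h. Qed.
Lemma ip_eq0 u : ip u u = 0 -> u = 0. Proof. by move: hX; rewrite /is_inner_product; case=> _ _ _ h; apply: h. Qed.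

Lemma ip0l w : ip 0 w = 0.
Proof. have h := ipDl (-1) 0 0 w. rewrite scaler0 addr0 in h. by rewrite h mulN1r addNr. Qed.
Lemma ipD u v w : ip (u + v) w = ip u w + ip v w.
Proof. by rewrite -{1}(scale1r u) ipDl mul1r. Qed.
Lemma ipZ a u w : ip (a *: u) w = a * ip u w.
Proof. by rewrite -(addr0 (a *: u)) ipDl ip0l addr0. Qed.
Lemma ipB u v w : ip (u - v) w = ip u w - ip v w.
Proof. by rewrite ipD -scaleN1r ipZ mulN1r. Qed.
Lemma ipZr a u w : ip w (a *: u) = a * ip w u.
Proof. by rewrite ipC ipZ ipC. Qed.
Lemma ipBr u v w : ip w (u - v) = ip w u - ip w v.
Proof. by rewrite ipC ipB ipC (ipC v). Qed.
Lemma ipDr u v w : ip w (u + v) = ip w u + ip w v.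
Proof. by rewrite ipC ipD !(ipC _ w). Qed.
Lemma ip_sum (I : finType) (A : {set I}) (f : I -> X) w :
  ip (\sum_(j in A) f j) w = \sum_(j in A) ip (f j) w.
Proof. by rewrite (big_morph (fun u => ip u w) (fun u v => ipD u v w) (ip0l w)). Qed.

Lemma ipnorm0 : ipnorm ip 0 = 0.
Proof. by rewrite /ipnorm ip0l sqrtr0. Qed.

Variable n : nat.
Variable phi : 'I_n -> X.
Variable P : X -> X.

Lemma WinvD u v : Winv ip phi P (u + v) = Winv ip phi P u + Winv ip phi P v.
Proof.
rewrite /Winv -big_split /=; apply: eq_bigr => i _.
by rewrite ipD mulrDl scalerDl.
Qed.
Lemma Winv0 : Winv ip phi P 0 = 0.
Proof. rewrite /Winv big1 // => i _. by rewrite ip0l mul0r scale0r. Qed.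
Lemma Winv_sum (A : {set 'I_n}) (f : 'I_n -> X) :
  Winv ip phi P (\sum_(j in A) f j) = \sum_(j in A) Winv ip phi P (f j).
Proof. by rewrite (big_morph _ WinvD Winv0). Qed.
End Aux.

Section Proj.
Variable R : realType.
Variables X Y : lmodType R.
Variable ipX : X -> X -> R.
Variable ipY : Y -> Y -> R.
Hypothesis hX : is_inner_product ipX.
Hypothesis hY : is_inner_product ipY.
Variable K : {linear X -> Y}.
Variable P : X -> X.
Hypothesis hP : is_proj_null_perp ipX K P.

Lemma KP x : K (P x) = K x.
Proof. have [_ h] := hP x. by apply/esym/eqP; rewrite -subr_eq0 -linearB h. Qed.

Lemma P_uniq x q : (forall z, K z = 0 -> ipX q z = 0) -> K q = K x -> q = P x.
Proof.
move=> hq hKq; have [hp _] := hP x.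
have hz : K (q - P x) = 0 by rewrite linearB hKq KP subrr.
apply/eqP; rewrite -subr_eq0; apply/eqP/(ip_eq0 hX).
by rewrite (ipB hX) hq // hp // subrr.
Qed.


Lemma P_perp x z : K z = 0 -> ipX (P x) z = 0.
Proof. by have [h _] := hP x; apply: h. Qed.

Lemma P_sum (m : nat) (A : {set 'I_m}) (f : 'I_m -> X) :
  P (\sum_(j in A) f j) = \sum_(j in A) P (f j).
Proof.
apply/esym/P_uniq.
  by move=> z hz; rewrite (ip_sum hX); apply: big1 => j _; apply: P_perp.
by rewrite !linear_sum; apply: eq_bigr => j _; apply: KP.
Qed.

Lemma mnls_P v x : is_mnls ipX ipY K (K v) x -> x = P v.
Proof.
case=> hls hmin.
have hlsP : forall w, ipnorm ipY (K (P v) - K v) <= ipnorm ipY (K w - K v).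
  by move=> w; rewrite KP subrr (ipnorm0 hY) sqrtr_ge0.
have := hls (P v); rewrite KP subrr (ipnorm0 hY) /ipnorm => hle.
have e0 : ipY (K x - K v) (K x - K v) = 0.
  apply/le_anti; rewrite (ip_ge0 hY) andbT -sqrtr_eq0; apply/eqP/le_anti.
  by rewrite hle sqrtr_ge0.
have hKx : K x = K v.
  by apply/eqP; rewrite -subr_eq0; apply/eqP/(ip_eq0 hY).
have hz : K (x - P v) = 0 by rewrite linearB hKx KP subrr.
have := hmin _ hlsP; rewrite /ipnorm ler_sqrt ?ip_ge0 // => hxx.
have ex : x = P v + (x - P v) by rewrite addrC subrK.
have key : forall z, K z = 0 -> ipX (P v + z) (P v + z) = ipX (P v) (P v) + ipX z z.
  move=> z hz'; rewrite (ipD hX) !(ipDr hX) (P_perp v hz') (ipC hX z (P v)) (P_perp v hz').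
  by rewrite addr0 add0r.
move: hxx; have := key _ hz; rewrite -ex => ->.
rewrite -lerBrDl subrr => h.
have z0 : x - P v = 0.
  by apply: (ip_eq0 hX); apply/le_anti; rewrite h ip_ge0.
by apply/eqP; rewrite -subr_eq0 z0.
Qed.
End Proj.

Theorem corollary1 (R : realType) (X Y : lmodType R)
  (ipX : X -> X -> R) (ipY : Y -> Y -> R)
  (hX : is_inner_product ipX) (hY : is_inner_product ipY)
  (K : {linear X -> Y}) (n : nat) (phi : 'I_n -> X)
  (hphi : is_orthonormal_basis ipX phi)
  (hK : forall i j : 'I_n, i != j -> forall c : R, K (phi i) <> c *: K (phi j))
  (P : X -> X) (hP : is_proj_null_perp ipX K P)
  (J : {set 'I_n}) (xstar : X) (xs : 'I_n -> X)
  (hxstar : is_mnls ipX ipY K (K (\sum_(j in J) phi j)) xstar)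
  (hxs : forall j, j \in J -> is_mnls ipX ipY K (K (phi j)) (xs j)) :
  Winv ipX phi P xstar = \sum_(j in J) Winv ipX phi P (xs j) /\
  (forall j, j \in J ->
     Winv ipX phi P (xs j) = \sum_(i < n) expcoef ipX phi P j i *: phi i /\
     (forall i, i != j -> expcoef ipX phi P j i < expcoef ipX phi P j j)).
Proof.
split.
  rewrite (mnls_P hX hY hP hxstar) (P_sum hX hP) (Winv_sum hX).
  by apply: eq_bigr => j hj; rewrite (mnls_P hX hY hP (hxs j hj)).
move=> j hj; rewrite (mnls_P hX hY hP (hxs j hj)).
have perpP : forall u k, K u = 0 -> ipX (P (phi k)) u = 0.
  by move=> u k hu; apply: (P_perp hP).
have hKk : forall k, K (phi k - P (phi k)) = 0.
  by move=> k; have [_ h] := hP (phi k).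
have ipPP : forall k l, ipX (P (phi k)) (phi l) = ipX (P (phi k)) (P (phi l)).
  move=> k l; apply/eqP; rewrite -subr_eq0 -(ipBr hX); apply/eqP.
  by apply: perpP.
have eqc : forall i, expcoef ipX phi P j i =
    ipX (P (phi j)) (P (phi i)) / ipnorm ipX (P (phi i)).
  move=> i; rewrite /expcoef (ipZ hX) (ipZr hX).
  have [h0|hn0] := eqVneq (ipnorm ipX (P (phi j))) 0.
    have u0 : P (phi j) = 0.
      apply: (ip_eq0 hX); apply/le_anti; rewrite (ip_ge0 hX) andbT -sqrtr_eq0.
      by apply/eqP.
    by rewrite u0 (ip0l hX) !mulr0 mul0r.
  by rewrite mulVKf // mulrC.
split.
  rewrite /Winv; apply: eq_bigr => i _; congr (_ *: _).
  by rewrite eqc ipPP.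
move=> i hij.
set u := P (phi j); set v := P (phi i).
have hKu : K u = K (phi j) by rewrite (KP hP).
have hKv : K v = K (phi i) by rewrite (KP hP).
have hji : j != i by rewrite eq_sym.
have u0 : u != 0.
  apply/eqP => u0; apply: (hK j i hji 0); rewrite scale0r -hKu u0 linear0 //.
have v0 : v != 0.
  apply/eqP => v0; apply: (hK i j hij 0); rewrite scale0r -hKv v0 linear0 //.
have pos : forall w, w != 0 -> 0 < ipX w w.
  move=> w w0; rewrite lt_def (ip_ge0 hX) andbT; apply/eqP => h.
  by move/eqP: w0; apply; apply: (ip_eq0 hX).
have uu := pos _ u0; have vv := pos _ v0.
have nu : 0 < ipnorm ipX u by rewrite sqrtr_gt0.
have nv : 0 < ipnorm ipX v by rewrite sqrtr_gt0.
rewrite !eqc -/u -/v.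
have -> : ipX u u / ipnorm ipX u = ipnorm ipX u.
  by rewrite -{1}(sqr_sqrtr (ltW uu)) expr2 -/(ipnorm ipX u) mulfK // gt_eqF.
rewrite (ltr_pdivrMr (ipnorm ipX u) (ipX u v) nv).
rewrite ltNge; apply/negP => hge.
set t := ipX u v / ipX v v.
set w := u - t *: v.
have ew : ipX w w * ipX v v = ipX u u * ipX v v - ipX u v ^+ 2.
  rewrite /w (ipB hX) !(ipBr hX) !(ipZ hX) !(ipZr hX) (ipC hX v u) /t.
  by field; rewrite gt_eqF.
have hsq : ipX u u * ipX v v <= ipX u v ^+ 2.
  have e1 : ipX u u * ipX v v = (ipnorm ipX u * ipnorm ipX v) ^+ 2.
    by rewrite exprMn /ipnorm !sqr_sqrtr // ltW.
  rewrite e1; have h0 : 0 <= ipnorm ipX u * ipnorm ipX v by rewrite mulr_ge0 // ltW.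
  by nra.
have ww : ipX w w = 0.
  apply/le_anti; rewrite (ip_ge0 hX) andbT.
  have : ipX w w * ipX v v <= 0 by rewrite ew subr_le0.
  by rewrite pmulr_lle0.
have w0 := ip_eq0 hX ww.
have eu : u = t *: v by apply/eqP; rewrite -subr_eq0 -/w w0.
by apply: (hK j i hji t); rewrite -hKu -hKv eu linearZ.
Qed.
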